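(* Under the standing assumptions, for any fixed $\lambda>0$, with $\eta_1=\frac1d+\frac{\lambda}{n^{1-(k-1)\alpha}\ln d}$, $$\sum_{0\le S\le n\eta_1}\Phi(S)\le \exp\left\{\frac{k\lambda p r}{1-p}\right\}+o(1)\quad (n\to\infty),$$ the sum being over integers $S$.
   Context: Parameters: integer $k\ge2$, constants $\alpha>0$, $r>0$, $0<p<1$; $d=n^{\alpha}$ (treated as an integer), $m=n\ln d$, $\tau=\frac1{1-p}$, $r_{cr}=\frac1{\ln\tau}$. Standing assumptions: $(2k-1)\alpha>1$, $k\alpha\le1$, $k\ge\frac{\tau\ln\tau}{\tau-1}$, and $r<r_{cr}$. Notation: $f(s)=1+\frac{p}{1-p}\cdot\frac{s^k-d^{-k}}{1-d^{-k}}$ for $s\in[0,1]$; $B(S)=\binom{n}{S}\left(\frac1d\right)^{S}\left(1-\frac1d\right)^{n-S}$; $W(S)=f(S/n)^{rm}$; $\Phi(S)=B(S)W(S)$ for $S=0,1,\dots,n$. Limits are as $n\to\infty$ with all constants fixed. *)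

(* Defs.v *)
From Stdlib Require Import Reals.
Open Scope R_scope.

Definition dd (alpha : R) (n : nat) : R := Rpower (INR n) alpha.
Definition mm (alpha : R) (n : nat) : R := INR n * ln (dd alpha n).
Definition tau (p : R) : R := 1 / (1 - p).
Definition r_cr (p : R) : R := 1 / ln (tau p).

Definition ff (k : nat) (p d s : R) : R :=
  1 + p / (1 - p) * ((s ^ k - / d ^ k) / (1 - / d ^ k)).

Definition BB (alpha : R) (n S : nat) : R :=
  Binomial.C n S * (/ dd alpha n) ^ S * (1 - / dd alpha n) ^ (n - S).

Definition WW (k : nat) (alpha r p : R) (n S : nat) : R :=
  Rpower (ff k p (dd alpha n) (INR S / INR n)) (r * mm alpha n).

Definition Phi (k : nat) (alpha r p : R) (n S : nat) : R :=
  BB alpha n S * WW k alpha r p n S.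

Definition eta1 (k : nat) (alpha lambda : R) (n : nat) : R :=
  / dd alpha n
  + lambda / (Rpower (INR n) (1 - (INR k - 1) * alpha) * ln (dd alpha n)).

Definition sum_Phi (k : nat) (alpha r p lambda : R) (n : nat) : R :=
  sum_f_R0 (fun S => if Rle_dec (INR S) (INR n * eta1 k alpha lambda n)
                     then Phi k alpha r p n S else 0) n.

(* Main.v *)
Require Import Defs.
From Stdlib Require Import Reals Lra Lia Psatz.
Open Scope R_scope.

Lemma pow_diff_bound a b k' : 0 <= a -> 0 <= b ->
  (a+b)^(S k') - a^(S k') <= INR (S k') * b * (a+b)^k'.
Proof.
  intros Ha Hb. induction k' as [|k IH].
  - simpl. lra.
  - assert (H1 : a^(S k) <= (a+b)^(S k)) by (apply pow_incr; lra).
    assert (H2 : 0 <= (a+b)^k) by (apply pow_le; lra).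
    replace ((a+b)^(S (S k)) - a^(S (S k))) with
      ((a+b)*((a+b)^(S k) - a^(S k)) + b * a^(S k)) by (simpl; ring).
    assert (H3 : (a+b)*((a+b)^(S k) - a^(S k)) <= (a+b)*(INR (S k) * b * (a+b)^k))
      by (apply Rmult_le_compat_l; lra).
    assert (H4 : b * a^(S k) <= b*(a+b)^(S k)) by (apply Rmult_le_compat_l; lra).
    assert (E : (a+b)^(S k) = (a+b)*(a+b)^k) by reflexivity.
    rewrite E in H4.
    apply Rle_trans with ((a+b)*(INR (S k) * b * (a+b)^k) + b*((a+b)*(a+b)^k)); [lra|].
    right. rewrite (S_INR (S k)). simpl. ring.
Qed.

Lemma exp_pow_INR z j : exp z ^ j = exp (INR j * z).
Proof.
  induction j as [|j IH].
  - simpl. rewrite Rmult_0_l, exp_0. reflexivity.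
  - rewrite S_INR. simpl. rewrite IH, <- exp_plus. f_equal. ring.
Qed.

Lemma C_nonneg n S : 0 <= Binomial.C n S.
Proof.
  unfold Binomial.C. apply Rmult_le_pos.
  - apply pos_INR.
  - left. apply Rinv_0_lt_compat. apply Rmult_lt_0_compat; apply INR_fact_lt_0.
Qed.

Lemma binom_sum q n : sum_f_R0 (fun S => Binomial.C n S * q^S * (1-q)^(n-S)) n = 1.
Proof.
  rewrite <- binomial. replace (q + (1-q)) with 1 by ring. apply pow1.
Qed.

Lemma exp_le x y : x <= y -> exp x <= exp y.
Proof. intros [H|H]; [left; apply exp_increasing; auto | subst; lra]. Qed.

Lemma ln_ge0 v : 1 <= v -> 0 <= ln v.
Proof. intros [H|H]; [left; rewrite <- ln_1; apply ln_increasing; lra | subst; rewrite ln_1; lra]. Qed.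

Lemma rpower_mono u v c : 0 <= c -> u <= v -> 1 <= v -> Rpower u c <= Rpower v c.
Proof.
  intros Hc Huv Hv. destruct (Rlt_dec 0 u) as [Hu|Hu].
  - apply Rle_Rpower_l; lra.
  - unfold Rpower at 1. replace (ln u) with 0.
    + rewrite Rmult_0_r. unfold Rpower. apply exp_le.
      apply Rmult_le_pos; auto. apply ln_ge0; auto.
    + unfold ln. destruct (Rlt_dec 0 u); [contradiction|reflexivity].
Qed.

Lemma ln_le_sub1 v : 0 < v -> ln v <= v - 1.
Proof.
  intros Hv. pose proof (exp_ineq1_le (ln v)). rewrite exp_ln in H; lra.
Qed.

Lemma ff_mono k p d s1 s2 : 0 < p < 1 -> / d ^ k < 1 -> 0 <= s1 <= s2 ->
  ff k p d s1 <= ff k p d s2.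
Proof.
  intros Hp Hd Hs. unfold ff. apply Rplus_le_compat_l.
  apply Rmult_le_compat_l.
  - unfold Rdiv. apply Rmult_le_pos; [lra|]. left; apply Rinv_0_lt_compat; lra.
  - unfold Rdiv. apply Rmult_le_compat_r.
    + left; apply Rinv_0_lt_compat; lra.
    + apply Rplus_le_compat_r. apply pow_incr. lra.
Qed.

Lemma ff_at k p d : d <> 0 -> / d ^ k < 1 -> ff k p d (/ d) = 1.
Proof.
  intros Hd0 Hd. unfold ff. rewrite pow_inv.
  replace (/ d ^ k - / d ^ k) with 0 by ring. unfold Rdiv. rewrite !Rmult_0_l. ring.
Qed.

Theorem lemma4p3 (k : nat) (alpha r p lambda : R) :
  (2 <= k)%nat -> 0 < alpha -> 0 < r -> 0 < p < 1 ->
  (2 * INR k - 1) * alpha > 1 ->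
  INR k * alpha <= 1 ->
  INR k >= tau p * ln (tau p) / (tau p - 1) ->
  r < r_cr p ->
  0 < lambda ->
  forall eps : R, 0 < eps ->
  exists N : nat, forall n : nat, (N <= n)%nat ->
    sum_Phi k alpha r p lambda n
      <= exp (INR k * lambda * p * r / (1 - p)) + eps.
Proof.
  intros Hk Ha Hr Hp H2k Hka _ _ Hl eps Heps.
  destruct k as [|k']; [lia|].
  assert (Hk' : 1 <= INR k') by (apply (le_INR 1); lia).
  set (A := INR (S k') * lambda * p * r / (1 - p)).
  assert (HA : 0 < A).
  { unfold A. unfold Rdiv. apply Rmult_lt_0_compat; [|apply Rinv_0_lt_compat; lra].
    rewrite S_INR. apply Rmult_lt_0_compat; [|lra]. apply Rmult_lt_0_compat; [|lra].
    apply Rmult_lt_0_compat; lra. }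
  set (L := ln (exp A + eps)).
  assert (HL : A < L).
  { unfold L. rewrite <- (ln_exp A) at 1. apply ln_increasing; [apply exp_pos|lra]. }
  set (mu := ln (L / A)).
  assert (Hmu : 0 < mu).
  { unfold mu. rewrite <- ln_1. apply ln_increasing; [lra|].
    apply (Rmult_lt_reg_r A); [lra|]. unfold Rdiv. rewrite Rmult_assoc, Rinv_l; lra. }
  set (th := Rmin (/2) (mu / (INR k' * lambda + 2))).
  assert (Hth : 0 < th).
  { unfold th. apply Rmin_pos; [lra|]. unfold Rdiv. apply Rmult_lt_0_compat; [lra|].
    apply Rinv_0_lt_compat. nra. }
  destruct (INR_unbounded (exp (/ (alpha * th)))) as [N HN].
  exists N. intros n Hn.
  set (x := INR n).
  assert (Hx : exp (/ (alpha * th)) < x).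
  { apply Rlt_le_trans with (INR N); [lra|]. apply le_INR; auto. }
  assert (Hx0 : 0 < x) by (pose proof (exp_pos (/ (alpha * th))); lra).
  set (y := ln x).
  assert (Hy : / (alpha * th) < y).
  { unfold y. rewrite <- (ln_exp (/ (alpha*th))). apply ln_increasing; auto. apply exp_pos. }
  assert (Hy0 : 0 < y).
  { apply Rlt_trans with (/ (alpha*th)); auto. apply Rinv_0_lt_compat; nra. }
  set (Q := / (alpha * y)).
  assert (HQ0 : 0 < Q) by (unfold Q; apply Rinv_0_lt_compat; apply Rmult_lt_0_compat; lra).
  assert (HQ : Q < th).
  { unfold Q. rewrite <- (Rinv_inv th). apply Rinv_lt_contravar.
    - apply Rmult_lt_0_compat; [apply Rinv_0_lt_compat; lra|]. apply Rmult_lt_0_compat; lra.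
    - apply (Rmult_lt_reg_l (/alpha)). apply Rinv_0_lt_compat; lra.
      rewrite <- Rmult_assoc, Rinv_l, Rmult_1_l by lra.
      rewrite Rinv_mult in Hy. lra. }
  set (d := exp (alpha * y)).
  assert (Hd : dd alpha n = d) by (unfold dd, Rpower, d, y, x; f_equal; ring).
  assert (Hd1 : 1 < d) by (unfold d; rewrite <- exp_0; apply exp_increasing; nra).
  assert (Hld : ln (dd alpha n) = alpha * y) by (rewrite Hd; unfold d; apply ln_exp).
  set (P := exp ((1 - INR k' * alpha) * y)).
  assert (HP0 : 0 < P) by apply exp_pos.
  assert (HP : Rpower (INR n) (1 - (INR (S k') - 1) * alpha) = P)
    by (unfold Rpower, P, y, x; f_equal; rewrite S_INR; ring).
  set (a := / d).
  set (b := lambda / (P * (alpha * y))).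
  assert (Ha0 : 0 < a) by (unfold a; apply Rinv_0_lt_compat; lra).
  assert (Hb0 : 0 <= b).
  { unfold b, Rdiv. apply Rmult_le_pos; [lra|]. left; apply Rinv_0_lt_compat.
    apply Rmult_lt_0_compat; [lra|]. apply Rmult_lt_0_compat; lra. }
  assert (Heta : eta1 (S k') alpha lambda n = a + b)
    by (unfold eta1; rewrite Hld, HP, Hd; reflexivity).
  assert (HdK : 1 < d ^ (S k')) by (apply Rlt_pow_R1; [lra|lia]).
  assert (He1 : / d ^ (S k') < 1).
  { rewrite <- Rinv_1. apply Rinv_lt_contravar; lra. }
  assert (He0 : 0 < / d ^ (S k')) by (apply Rinv_0_lt_compat; lra).
  assert (Hmm : mm alpha n = x * (alpha * y)) by (unfold mm; rewrite Hld; reflexivity).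
  assert (Hm0 : 0 <= r * (x * (alpha * y))).
  { apply Rmult_le_pos; [lra|]. apply Rmult_le_pos; [lra|]. apply Rmult_le_pos; lra. }
  assert (Hf1 : 1 <= ff (S k') p d (a + b)).
  { rewrite <- (ff_at (S k') p d) at 1 by (auto; lra).
    apply ff_mono; auto. fold a. lra. }
  set (W := Rpower (ff (S k') p d (a + b)) (r * (x * (alpha * y)))).
  assert (Claim1 : sum_Phi (S k') alpha r p lambda n <= W).
  { unfold sum_Phi. rewrite Heta.
    apply Rle_trans with (sum_f_R0 (fun S => BB alpha n S * W) n).
    - apply sum_Rle. intros S HS.
      assert (HB : 0 <= BB alpha n S).
      { unfold BB; rewrite Hd. fold a.
        apply Rmult_le_pos; [apply Rmult_le_pos; [apply C_nonneg| apply pow_le; lra]|].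
        apply pow_le. assert (a < 1) by (unfold a; rewrite <- Rinv_1; apply Rinv_lt_contravar; lra). lra. }
      destruct (Rle_dec (INR S) (INR n * (a + b))) as [HS'|HS'].
      + unfold Phi, WW. apply Rmult_le_compat_l; auto. rewrite Hd, Hmm.
        apply rpower_mono; auto. apply ff_mono; auto. split.
        * unfold Rdiv. apply Rmult_le_pos; [apply pos_INR|]. left; apply Rinv_0_lt_compat; auto.
        * unfold Rdiv. apply (Rmult_le_reg_l x); [lra|].
          replace (x * (INR S * / INR n)) with (INR S) by (unfold x; field; fold x; lra). unfold x; lra.
      + apply Rmult_le_pos; auto. unfold W, Rpower; left; apply exp_pos.
    - rewrite <- scal_sum. unfold BB. rewrite binom_sum. lra. }
  assert (Claim2 : W <= exp (r * (x * (alpha * y)) * (ff (S k') p d (a + b) - 1))).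
  { unfold W, Rpower. apply exp_le. apply Rmult_le_compat_l; auto. apply ln_le_sub1; lra. }
  set (E := exp (INR k' * (alpha * y))).
  assert (HE0 : 0 < E) by apply exp_pos.
  assert (Hxe : x = P * E).
  { unfold P, E. rewrite <- exp_plus. transitivity (exp (ln x)); [symmetry; apply exp_ln; lra|].
    f_equal. unfold y. ring. }
  assert (Hbd : b * d <= lambda * Q).
  { assert (HdP : d <= P).
    { unfold d, P. apply exp_le. rewrite S_INR in Hka. nra. }
    replace (b * d) with (lambda * Q * (d / P)) by (unfold b, Q; field; split; lra).
    rewrite <- (Rmult_1_r (lambda * Q)) at 2. apply Rmult_le_compat_l; [nra|].
    unfold Rdiv. apply (Rmult_le_reg_r P); auto. rewrite Rmult_assoc, Rinv_l; lra. }
  assert (Hmain : x * (alpha * y) * ((a + b) ^ (S k') - / d ^ (S k'))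
                  <= INR (S k') * lambda * exp (INR k' * (lambda * Q))).
  { rewrite <- pow_inv. fold a.
    apply Rle_trans with (x * (alpha * y) * (INR (S k') * b * (a + b) ^ k')).
    { apply Rmult_le_compat_l; [apply Rmult_le_pos; [lra|]; apply Rmult_le_pos; lra|].
      apply pow_diff_bound; lra. }
    assert (Hab : a + b = (1 + b * d) * a) by (unfold a; field; lra).
    rewrite Hab, Rpow_mult_distr.
    assert (Hak : a ^ k' = / E) by (unfold a, E, d; rewrite pow_inv, exp_pow_INR; reflexivity).
    rewrite Hak.
    replace (x * (alpha * y) * (INR (S k') * b * ((1 + b * d) ^ k' * / E)))
      with (INR (S k') * lambda * (1 + b * d) ^ k')
      by (rewrite Hxe; unfold b; field; repeat split; lra).
    apply Rmult_le_compat_l; [rewrite S_INR; nra|].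
    rewrite <- exp_pow_INR.
    apply pow_incr. split; [nra|].
    apply Rle_trans with (1 + lambda * Q); [lra|]. apply exp_ineq1_le. }
  assert (HeQ : / d ^ (S k') <= Q).
  { unfold Q. apply Rinv_le_contravar; [nra|].
    apply Rle_trans with d.
    - unfold d. pose proof (exp_ineq1_le (alpha * y)). lra.
    - rewrite <- (pow_1 d) at 1. apply Rle_pow; [lra|lia]. }
  assert (Hth2 : th <= / 2) by apply Rmin_l.
  assert (Hthmu : th * (INR k' * lambda + 2) <= mu).
  { assert (th <= mu / (INR k' * lambda + 2)) by apply Rmin_r.
    apply (Rmult_le_compat_r (INR k' * lambda + 2)) in H; [|nra].
    unfold Rdiv in H. rewrite Rmult_assoc, Rinv_l in H; nra. }
  set (e := / d ^ (S k')) in *.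
  assert (Hinv : / (1 - e) <= exp (2 * Q)).
  { apply Rle_trans with (1 + 2 * e).
    - apply (Rmult_le_reg_l (1 - e)); [lra|]. rewrite Rinv_r by lra. nra.
    - apply Rle_trans with (1 + 2 * Q); [lra|]. apply exp_ineq1_le. }
  assert (Claim3 : r * (x * (alpha * y)) * (ff (S k') p d (a + b) - 1) <= L).
  { replace (r * (x * (alpha * y)) * (ff (S k') p d (a + b) - 1))
      with (r * p / (1 - p) * / (1 - e) * (x * (alpha * y) * ((a + b) ^ (S k') - e)))
      by (unfold ff; fold e; field; lra).
    apply Rle_trans with (r * p / (1 - p) * exp (2 * Q) * (INR (S k') * lambda * exp (INR k' * (lambda * Q)))).
    { apply Rmult_le_compat.
      - apply Rmult_le_pos; [|left; apply Rinv_0_lt_compat; lra].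
        unfold Rdiv; apply Rmult_le_pos; [nra|]. left; apply Rinv_0_lt_compat; lra.
      - apply Rmult_le_pos; [apply Rmult_le_pos; [lra|]; apply Rmult_le_pos; lra|].
        unfold e; rewrite <- pow_inv; fold a.
        assert (a ^ (S k') <= (a + b) ^ (S k')) by (apply pow_incr; lra). lra.
      - apply Rmult_le_compat_l; auto. unfold Rdiv; apply Rmult_le_pos; [nra|]. left; apply Rinv_0_lt_compat; lra.
      - auto. }
    replace (r * p / (1 - p) * exp (2 * Q) * (INR (S k') * lambda * exp (INR k' * (lambda * Q))))
      with (A * exp (INR k' * (lambda * Q) + 2 * Q))
      by (unfold A; rewrite exp_plus; field; lra).
    apply Rle_trans with (A * exp mu).
    - apply Rmult_le_compat_l; [lra|]. apply exp_le. nra.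
    - unfold mu. rewrite exp_ln; [right; field; lra|].
      unfold Rdiv. apply Rmult_lt_0_compat; [lra|]. apply Rinv_0_lt_compat; lra. }
  apply Rle_trans with W; auto. apply Rle_trans with (exp L).
  - apply Rle_trans with (exp (r * (x * (alpha * y)) * (ff (S k') p d (a + b) - 1))); auto.
    apply exp_le; auto.
  - unfold L. rewrite exp_ln; [fold A; lra|]. pose proof (exp_pos A); lra.
Qed.
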